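(* Let $\mathbb{Z}[a,b]$ carry the $\lambda$-ring structure $\Lambda_1\otimes\Lambda_{-1}$, i.e. $a$ is a line element and $b$ satisfies $\lambda^n(b)=b^n$ for all $n$, and let $x=a+b$. Then the $\lambda$-ring homomorphism $\Lambda\to\mathbb{Z}[a,b]$ sending $e_1$ to $x$ has kernel $I_{(2,2)}$ and image $\mathbb{Z}+x\,\mathbb{Z}[a,b]$; thus $\Lambda_{(2,2)}=\Lambda/I_{(2,2)}\cong\mathbb{Z}+x\mathbb{Z}[a,b]$, and in it $\lambda^{n+1}(x)=xb^n$ for all $n\ge0$.
   Context: $\lambda$-rings are special $\lambda$-rings. $\Lambda=\mathbb{Z}[e_1,e_2,\dots]$ is the ring of symmetric functions, the free $\lambda$-ring on $e_1$ with $\lambda^n(e_1)=e_n$, with Schur function basis $s_\pi$. $I_{(2,2)}$ is the subgroup (ideal) of $\Lambda$ spanned by the $s_\pi$ for partitions $\pi$ whose Young diagram contains that of $(2,2)$, i.e. $\pi_1\ge2$ and $\pi_2\ge2$. A line element is an element $\ell$ with $\lambda^n(\ell)=0$ for $n>1$. *)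

(* Defs.v *)
From HB Require Import structures.
From mathcomp Require Import all_boot all_order all_algebra all_fingroup.
Set Implicit Arguments. Unset Strict Implicit. Unset Printing Implicit Defensive.
Import Order.TTheory GRing.Theory Num.Theory.
Local Open Scope ring_scope.

(* Z[a,b] is {poly {poly int}}: outer variable b, inner variable a.    *)
Definition Rab := {poly {poly int}}.
Definition bZ : Rab := 'X.
Definition aZ : Rab := ('X : {poly int})%:P.
Definition xZ : Rab := aZ + bZ.

(* Truncated (mod t^(n+1)) power series (1 + m t)^c, c an integer.     *)
Definition lfac (n : nat) (m : Rab) (c : int) : {poly Rab} :=
  match c with
  | Posz k => (1 + m *: 'X) ^+ k
  | Negz k => (\sum_(k0 < n.+1) (- m) ^+ k0 *: 'X^k0) ^+ k.+1
  end.

(* Write p = sum c_ij a^i b^j.  Here a and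
   -b are line elements, hence so is every a^i (-b)^j, and
   a^i b^j = (-1)^j a^i (-b)^j; thus
   lambda_t(p) = prod_ij (1 + a^i (-b)^j t)^((-1)^j c_ij).
   This is the (special) lambda-ring structure Lambda_1 (x) Lambda_{-1}:
   a is a line element and lambda_t(b) = 1/(1 - b t), i.e. lambda^n b = b^n. *)
Definition lam_t (n : nat) (p : Rab) : {poly Rab} :=
  \prod_(j < size p) \prod_(i < size p`_j)
     lfac n (aZ ^+ i * (- bZ) ^+ j) ((-1) ^+ j * p`_j`_i).

Definition lamR (n : nat) (p : Rab) : Rab := (lam_t n p)`_n.

(* The ring of symmetric functions Lambda = Z[e_1, e_2, ...].          *)
(* An element is represented by a formal finite Z-linear combination   *)
(* of e-monomials e_{k_1} ... e_{k_r} (a monomial is a seq nat of      *)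
(* indices; e_0 = 1).  Two representatives denote the same element of  *)
(* Lambda iff they have the same coefficient on every monomial         *)
(* e_mu (mu a partition, i.e. normalised monomial).                    *)
Definition Lam := seq (seq nat * int).

Definition nmon (m : seq nat) : seq nat := sort geq (filter (fun k => 0 < k)%N m).

Definition coefL (f : Lam) (mu : seq nat) : int :=
  \sum_(t <- f | nmon t.1 == mu) t.2.

Definition lam_eq (f g : Lam) : Prop := forall mu, coefL f mu = coefL g mu.

Definition is_partition (p : seq nat) : bool :=
  sorted geq p && all (fun k => 0 < k)%N p.

Definition contains22 (p : seq nat) : bool :=
  (2 <= nth 0 p 0)%N && (2 <= nth 0 p 1)%N.

Definition conjp (p : seq nat) : seq nat :=
  [seq count (fun q => i < q)%N p | i <- iota 0 (head 0%N p)].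

(* Schur function via the dual Jacobi-Trudi identity:
   s_p = det( e_{p'_i - i + j} )_{1 <= i,j <= l(p')},
   with e_0 = 1 and e_k = 0 for k < 0 (0-based indices below). *)
Definition jt_idx (c : seq nat) (i j : nat) : int :=
  (nth 0%N c i)%:Z - i%:Z + j%:Z.

Definition schur (p : seq nat) : Lam :=
  let c := conjp p in
  let l := size c in
  [seq ([seq absz (jt_idx c i (s i)) | i : 'I_l <- enum 'I_l],
        ((-1) ^+ odd_perm s : int))
  | s : {perm 'I_l} <- enum [set: {perm 'I_l}]
  & all (fun i : 'I_l => 0 <= jt_idx c i (s i)) (enum 'I_l)].

Definition lam_comb (cs : seq (seq nat * int)) : Lam :=
  flatten [seq [seq (t.1, pc.2 * t.2) | t <- schur pc.1] | pc <- cs].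

Definition in_I22 (f : Lam) : Prop :=
  exists cs : seq (seq nat * int),
    all (fun pc => is_partition pc.1 && contains22 pc.1) cs /\ lam_eq f (lam_comb cs).

(* The lambda-ring homomorphism Lambda -> Z[a,b] with e_1 |-> x:
   as a ring homomorphism it is determined by e_n |-> lambda^n(x). *)
Definition phi (f : Lam) : Rab :=
  \sum_(t <- f) t.2%:~R * \prod_(k <- t.1) lamR k xZ.

(* Main.v *)
Require Import Defs.
From HB Require Import structures.
From mathcomp Require Import all_boot all_order all_algebra all_fingroup.
From Stdlib Require Import Lia.
Import Order.TTheory GRing.Theory Num.Theory.
Local Open Scope ring_scope.

Lemma xZ_seq : polyseq xZ = [:: 'X; 1].
Proof. by rewrite /xZ /aZ /bZ addrC polyseqXaddC. Qed.

Lemma lam_t_x n : lam_t n xZ = (1 + aZ *: 'X) * \poly_(k < n.+1) (bZ ^+ k).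
Proof.
rewrite /lam_t xZ_seq /=.
rewrite !big_ord_recl big_ord0 /= polyseqX polyseq1 /=.
rewrite !big_ord_recl !big_ord0 /= /bump /= !expr0 !expr1 !mulr1 !mul1r. 
by rewrite opprK poly_def.
Qed.

Definition E (k : nat) : Rab := lamR k xZ.

Lemma E0 : E 0 = 1.
Proof.
rewrite /E /lamR lam_t_x mulrDl mul1r coefD -scalerAl coefZ coefXM /=.
by rewrite coef_poly /= mulr0 addr0 expr0.
Qed.

Lemma ES n : E n.+1 = xZ * bZ ^+ n.
Proof.
rewrite /E /lamR lam_t_x mulrDl mul1r coefD -scalerAl coefZ coefXM /=.
rewrite !coef_poly ltnSn ltnW // exprS /xZ mulrDl addrC; congr (_ + _).
Qed.

Definition P (m : seq nat) : Rab := \prod_(k <- m) E k.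

Lemma phiE f : phi f = \sum_(t <- f) t.2%:~R * P t.1.
Proof. by []. Qed.

Lemma perm_nmon m : perm_eq (nmon m) (filter (fun k => 0 < k)%N m).
Proof. by rewrite /nmon perm_sort. Qed.

Lemma P_nmon m : P (nmon m) = P m.
Proof.
rewrite /P (perm_big _ (perm_nmon m)) big_filter.
rewrite [RHS](bigID (fun k => 0 < k)%N) /= [X in _ = _ * X]big1 ?mulr1 //.
by move=> [|k] //= _; rewrite E0.
Qed.

Lemma nmon_part m : is_partition (nmon m).
Proof.
rewrite /is_partition /nmon sort_sorted /=; last by move=> x y; exact: leq_total.
by rewrite all_sort; apply/allP => k; rewrite mem_filter => /andP[].
Qed.

Lemma nmon_id mu : is_partition mu -> nmon mu = mu.
Proof.
case/andP => Hs Ha; rewrite /nmon (all_filterP Ha) sorted_sort //.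
by move=> x y z /= H1 H2; exact: leq_trans H1.
Qed.

Lemma nmonK m : nmon (nmon m) = nmon m.
Proof. exact/nmon_id/nmon_part. Qed.

Lemma coefL_cat f g mu : coefL (f ++ g) mu = coefL f mu + coefL g mu.
Proof. by rewrite /coefL big_cat. Qed.

Definition sc (c : int) (f : Lam) : Lam := [seq (t.1, c * t.2) | t <- f].

Lemma coefL_sc c f mu : coefL (sc c f) mu = c * coefL f mu.
Proof. by rewrite /coefL big_map mulr_sumr. Qed.

Lemma coefL_nil mu : coefL [::] mu = 0.
Proof. by rewrite /coefL big_nil. Qed.

Lemma coefL_cons t f mu : coefL (t :: f) mu = (if nmon t.1 == mu then t.2 else 0) + coefL f mu.
Proof. by rewrite /coefL big_cons; case: ifP => // _; rewrite add0r. Qed.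

Lemma phi_cat f g : phi (f ++ g) = phi f + phi g.
Proof. by rewrite /phi big_cat. Qed.

Lemma phi_sc c f : phi (sc c f) = c%:~R * phi f.
Proof.
rewrite /phi big_map mulr_sumr; apply: eq_bigr => t _.
by rewrite intrM mulrA.
Qed.

Lemma phi_coefL f U : uniq U -> {subset [seq nmon t.1 | t <- f] <= U} ->
  phi f = \sum_(mu <- U) (coefL f mu)%:~R * P mu.
Proof.
move=> uU sub.
rewrite /phi.
transitivity (\sum_(t <- f) \sum_(mu <- U) (if nmon t.1 == mu then t.2 else 0)%:~R * P mu).
  apply: eq_big_seq => t tf.
  have inU : nmon t.1 \in U by apply: sub; apply/mapP; exists t.
  rewrite [RHS](bigD1_seq (nmon t.1)) //= eqxx [X in _ = _ + X]big1 ?addr0 ?P_nmon //.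
  by move=> mu /negbTE; rewrite eq_sym => ->; rewrite mul0r.
rewrite exchange_big /=; apply: eq_bigr => mu _.
rewrite /coefL -mulr_suml rmorph_sum /=; congr (_ * _).
rewrite [in RHS]big_mkcond /=; apply: eq_bigr => t _; by case: ifP.
Qed.

Lemma phi_lam_eq f g : lam_eq f g -> phi f = phi g.
Proof.
move=> H.
set U := undup ([seq nmon t.1 | t <- f] ++ [seq nmon t.1 | t <- g]).
have uU : uniq U by apply: undup_uniq.
rewrite (@phi_coefL f U uU) ?(@phi_coefL g U uU).
- by apply: eq_bigr => mu _; rewrite H.
- by move=> mu mi; rewrite mem_undup mem_cat mi orbT.
- by move=> mu mi; rewrite mem_undup mem_cat mi.
Qed.

Lemma lam_comb_cons pc cs : lam_comb (pc :: cs) = sc pc.2 (schur pc.1) ++ lam_comb cs.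
Proof. by []. Qed.

Lemma coefL_comb cs mu : coefL (lam_comb cs) mu = \sum_(pc <- cs) pc.2 * coefL (schur pc.1) mu.
Proof.
elim: cs => [|pc cs IH]; first by rewrite big_nil coefL_nil.
by rewrite lam_comb_cons coefL_cat coefL_sc IH big_cons.
Qed.

Lemma phi_comb cs : phi (lam_comb cs) = \sum_(pc <- cs) pc.2%:~R * phi (schur pc.1).
Proof.
elim: cs => [|pc cs IH]; first by rewrite big_nil /phi big_nil.
by rewrite lam_comb_cons phi_cat phi_sc IH big_cons.
Qed.

Definition inS0 (y : Rab) := exists (k : int) (q : Rab), y = k%:~R + xZ * q.

Lemma inS0_mul y z : inS0 y -> inS0 z -> inS0 (y * z).
Proof.
move=> [k1 [q1 ->]] [k2 [q2 ->]].
exists (k1 * k2), (k1%:~R * q2 + q1 * (k2%:~R + xZ * q2)).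
rewrite mulrDl mulrDr intrM -addrA; congr (_ + _).
by rewrite [RHS]mulrDr; congr (_ + _); [exact: mulrCA | rewrite mulrA].
Qed.

Lemma inS0_add y z : inS0 y -> inS0 z -> inS0 (y + z).
Proof.
move=> [k1 [q1 ->]] [k2 [q2 ->]].
exists (k1 + k2), (q1 + q2).
by rewrite intrD mulrDr addrACA.
Qed.

Lemma inS0_P m : inS0 (P m).
Proof.
elim: m => [|k m IH]; first by exists 1, 0; rewrite /P big_nil mulr0 addr0.
rewrite /P big_cons; apply: inS0_mul => //.
case: k => [|k]; first by exists 1, 0; rewrite E0 mulr0 addr0.
by exists 0, (bZ ^+ k); rewrite ES add0r.
Qed.

Lemma inS0_phi f : inS0 (phi f).
Proof.
rewrite /phi; apply: (big_ind inS0).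
- by exists 0, 0; rewrite mulr0 addr0.
- exact: inS0_add.
- move=> t _; apply: inS0_mul; last exact: inS0_P.
  by exists t.2, 0; rewrite mulr0 addr0.
Qed.

Definition Img (y : Rab) := exists f, phi f = y.

Definition mulL (f g : Lam) : Lam := [seq (t.1 ++ u.1, t.2 * u.2) | t <- f, u <- g].

Lemma phi_mulL f g : phi (mulL f g) = phi f * phi g.
Proof.
rewrite /phi /mulL big_allpairs_dep big_distrlr /=; apply: eq_bigr => t _.
apply: eq_bigr => u _.
by rewrite /P big_cat /= intrM mulrACA.
Qed.

Lemma Img_add y z : Img y -> Img z -> Img (y + z).
Proof. by move=> [f <-] [g <-]; exists (f ++ g); rewrite phi_cat. Qed.

Lemma Img_mul y z : Img y -> Img z -> Img (y * z).
Proof. by move=> [f <-] [g <-]; exists (mulL f g); rewrite phi_mulL. Qed.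

Lemma Img_scale (c : int) y : Img y -> Img (c%:~R * y).
Proof. by move=> [f <-]; exists (sc c f); rewrite phi_sc. Qed.

Lemma Img_int (c : int) : Img c%:~R.
Proof. by exists [:: ([::], c)]; rewrite /phi big_seq1 /P big_nil mulr1. Qed.

Lemma Img_E k : Img (E k).
Proof. by exists [:: ([:: k], 1)]; rewrite /phi big_seq1 /P big_seq1 mul1r. Qed.

Lemma Img_sum I (r : seq I) (F : I -> Rab) : (forall i, Img (F i)) -> Img (\sum_(i <- r) F i).
Proof.
move=> H; apply: (big_ind Img) => //; first by exists [::]; rewrite /phi big_nil.
exact: Img_add.
Qed.

Lemma Img_xab i j : Img (xZ * (aZ ^+ i * bZ ^+ j)).
Proof.
elim: i j => [|i IH] j; first by rewrite expr0 mul1r -ES; apply: Img_E.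
have k1 : xZ * (aZ ^+ i.+1 * bZ ^+ j) = (xZ * (aZ ^+ i * bZ ^+ j)) * aZ.
  by rewrite [in LHS]exprSr [in LHS]mulrAC -[RHS]mulrA.
have k2 : xZ * (aZ ^+ i * bZ ^+ j.+1) = (xZ * (aZ ^+ i * bZ ^+ j)) * bZ.
  by rewrite exprSr !mulrA.
have -> : xZ * (aZ ^+ i.+1 * bZ ^+ j) =
   (xZ * (aZ ^+ i * bZ ^+ j)) * E 1 + (-1)%:~R * (xZ * (aZ ^+ i * bZ ^+ j.+1)).
  rewrite k1 k2 ES expr0 mulr1 mulN1r; set u := xZ * _.
  by rewrite /xZ mulrDr addrK.
apply: Img_add; first by apply: Img_mul => //; apply: Img_E.
exact: Img_scale.
Qed.

Lemma Img0 : Img 0.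
Proof. by exists [::]; rewrite /phi big_nil. Qed.

Lemma Img_c (c : {poly int}) i j : Img (xZ * (c%:P * (aZ ^+ i * bZ ^+ j))).
Proof.
elim/poly_ind: c i j => [|c d IH] i j; first by rewrite mul0r mulr0; exact: Img0.
rewrite polyCD polyCM [X in xZ * X]mulrDl mulrDr; apply: Img_add.
  have -> : c%:P * ('X : {poly int})%:P * (aZ ^+ i * bZ ^+ j) = c%:P * (aZ ^+ i.+1 * bZ ^+ j).
    by rewrite -/aZ -mulrA [aZ * _]mulrA -exprS.
  exact: IH.
have -> : ((d%:P)%:P : Rab) = d%:~R.
  by rewrite -[d in LHS]intz !rmorph_int.
by rewrite mulrCA; apply: Img_scale; apply: Img_xab.
Qed.

Lemma Img_xq q : Img (xZ * q).
Proof.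
suff H : forall j, Img (xZ * (q * bZ ^+ j)) by move: (H 0%N); rewrite expr0 mulr1.
elim/poly_ind: q => [|p c IH] j; first by rewrite mul0r mulr0; exact: Img0.
rewrite [X in xZ * X]mulrDl mulrDr; apply: Img_add.
  by rewrite -mulrA -exprS; apply: IH.
by move: (Img_c c 0 j); rewrite expr0 mul1r.
Qed.

Lemma part2 y : (exists f : Lam, phi f = y) <-> exists (k : int) (q : Rab), y = k%:~R + xZ * q.
Proof.
split; first by move=> [f <-]; exact: inS0_phi.
move=> [k [q ->]]; apply: Img_add; [exact: Img_int | exact: Img_xq].
Qed.

Lemma det_prop n (A : 'M[Rab]_n) i1 i2 (k : Rab) :
  i1 != i2 -> (forall j, A i1 j = k * A i2 j) -> \det A = 0.
Proof.
move=> ne H.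
pose B : 'M[Rab]_n := \matrix_(i, j) (if i == i1 then A i2 j else A i j).
have -> : \det A = k * \det B + 0 * \det A.
  apply: (@determinant_multilinear _ _ A B A i1).
  - by apply/rowP => j; rewrite !mxE eqxx mul0r addr0 H.
  - by apply/matrixP => i j; rewrite !mxE eq_sym (negbTE (neq_lift _ _)).
  - by [].
rewrite mul0r addr0 (@determinant_alternate _ _ B i1 i2 ne) ?mulr0 //.
by move=> j; rewrite !mxE eqxx eq_sym (negbTE ne).
Qed.

Definition schurc (c : seq nat) : Lam :=
  let l := size c in
  [seq ([seq absz (jt_idx c i (s i)) | i : 'I_l <- enum 'I_l],
        ((-1) ^+ odd_perm s : int))
  | s : {perm 'I_l} <- enum [set: {perm 'I_l}]
  & all (fun i : 'I_l => 0 <= jt_idx c i (s i)) (enum 'I_l)].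

Lemma schurE p : schur p = schurc (conjp p).
Proof. by []. Qed.

Definition Ez (z : int) : Rab := if (0 <= z) then E (absz z) else 0.

Lemma phi_schurc c :
  phi (schurc c) = \det (\matrix_(i < size c, j < size c) Ez (jt_idx c i j)).
Proof.
rewrite /phi /schurc big_map big_filter big_enum_cond /=.
rewrite /determinant big_mkcond /=; apply: eq_bigr => s _.
rewrite in_setT /=.
case: ifP => [/allP good | /negbT bad].
  rewrite /P big_map big_enum /=; congr (_ * _).
    by case: (odd_perm s); rewrite /= ?expr1 ?expr0.
  apply: eq_bigr => i _; rewrite mxE /Ez good //; exact: mem_enum.
have [i _ Hi] : exists2 i, i \in enum 'I_(size c) & ~~ (0 <= jt_idx c i (s i)).
  by apply/hasP; rewrite has_predC.
rewrite (bigD1 i) //= mxE /Ez (negbTE Hi) mul0r mulr0 //.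
Qed.

Lemma E_shift m d : E (m.+1 + d) = bZ ^+ d * E m.+1.
Proof. by rewrite addSn !ES exprD [RHS]mulrCA [bZ ^+ d * _]mulrC. Qed.

Lemma phi_schur22 p : is_partition p -> contains22 p -> phi (schur p) = 0.
Proof.
case: p => [|a [|b r]] _; rewrite /contains22 /= ?andbF // => /andP[Ha Hb].
rewrite schurE phi_schurc.
set c := conjp _.
have sc : size c = a by rewrite /c /conjp size_map size_iota.
have c0 : nth 0%N c 0 = count (fun q => 0 < q)%N [:: a, b & r].
  by rewrite /c /conjp (nth_map 0%N) ?size_iota ?(leq_trans _ Ha) // nth_iota ?(leq_trans _ Ha).
have c1 : nth 0%N c 1 = count (fun q => 1 < q)%N [:: a, b & r].
  by rewrite /c /conjp (nth_map 0%N) ?size_iota ?(leq_trans _ Ha) // nth_iota ?(leq_trans _ Ha).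
have c1ge : (2 <= nth 0%N c 1)%N by rewrite c1 /= Ha Hb.
have c01 : (nth 0%N c 1 <= nth 0%N c 0)%N.
  by rewrite c0 c1; apply: sub_count => q /=; exact: ltnW.
have H0 : (0 < size c)%N by rewrite sc (leq_trans _ Ha).
have H1 : (1 < size c)%N by rewrite sc.
apply: (@det_prop _ _ (Ordinal H0) (Ordinal H1) (bZ ^+ (nth 0%N c 0 - nth 0%N c 1).+1)) => // j.
rewrite !mxE /jt_idx /=.
move: c1ge c01; case: (nth 0%N c 1) => [|[|c1']] //= _ le10.
have -> : (c1'.+2%:Z - 1 + j%:Z) = (c1'.+1 + j)%N%:Z.
  by rewrite -addn1 -addn1 !PoszD addrK -addn1 PoszD.
rewrite subr0 /Ez !le0z_nat -!PoszD !absz_nat.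
set c0' := nth 0%N c 0.
have -> : (c0' + j = (c1' + j).+1 + (c0' - c1'.+2).+1)%N.
  move/ssrnat.leP: le10 => le10; rewrite -!minusE -!plusE; lia.
by rewrite E_shift addSn.
Qed.

Lemma part1_easy f : in_I22 f -> phi f = 0.
Proof.
move=> [cs [Hcs Heq]]; rewrite (phi_lam_eq _ _ Heq) phi_comb big1_seq // => pc /andP[_ pcin].
by move/allP: Hcs => /(_ pc pcin) /andP[Hp H22]; rewrite phi_schur22 // mulr0.
Qed.

Definition theta : {rmorphism {poly int} -> Rab} := horner_eval (aZ - bZ) \o map_poly (intr : int -> Rab).
Definition psi : {rmorphism Rab -> Rab} := horner_eval bZ \o map_poly theta.

Lemma psi_b : psi bZ = bZ.
Proof. by rewrite /psi /= /bZ map_polyX /horner_eval hornerX. Qed.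

Lemma psi_a : psi aZ = aZ - bZ.
Proof.
rewrite /psi /= /aZ map_polyC /horner_eval hornerC /theta /= map_polyX.
by rewrite /horner_eval hornerX.
Qed.

Lemma psi_x : psi xZ = aZ.
Proof. by rewrite /xZ rmorphD psi_a psi_b subrK. Qed.

Definition hookp (mu : seq nat) := is_partition mu && (nth 0%N mu 1 <= 1)%N.

Lemma hook_shape a r : hookp (a :: r) -> r = nseq (size r) 1%N /\ (0 < a)%N.
Proof.
case/andP => /andP[Hs Ha] H1.
move: Ha => /= /andP[a0 Hr]; split => //.
apply/all_pred1P; apply/allP => k kr.
move: H1; case: r Hs Hr kr => [|b r'] //= Hs /andP[b0 Hr'] kr b1.
have ble : (k <= b)%N.
  move: kr; rewrite inE => /orP[/eqP -> //|kr'].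
  have /andP[_ Hp] := Hs.
  have := order_path_min _ Hp; move=> /(_ _) /allP H.
  by apply: H => // x y z /= h1 h2; exact: leq_trans h2 h1.
have kpos : (0 < k)%N by move: kr; rewrite inE => /orP[/eqP -> //|/(allP Hr')].
by apply/eqP; apply/anti_leq; rewrite kpos (leq_trans ble b1).
Qed.

Lemma P_hook mu : hookp mu -> P mu = xZ ^+ (size mu) * bZ ^+ (head 0%N mu).-1.
Proof.
case: mu => [|a r]; first by rewrite /P big_nil !expr0 mulr1.
move=> /hook_shape [-> a0]; rewrite /P big_cons /= size_nseq.
case: a a0 => [|a] // _; rewrite ES.
have -> : \prod_(j <- nseq (size r) 1%N) E j = xZ ^+ size r.
  elim: (size r) => [|n IH]; first by rewrite big_nil.
  by rewrite /= big_cons IH ES expr0 mulr1 exprS.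
by rewrite exprS mulrAC.
Qed.

Lemma coef_ab s t S T : ((aZ ^+ s * bZ ^+ t)`_T)`_S = ((s == S) && (t == T))%:R :> int.
Proof.
rewrite /bZ coefMXn /aZ -rmorphXn coefC.
case: ltnP => h.
  by rewrite coef0 (_ : (t == T) = false) ?andbF // eq_sym; apply/negbTE; rewrite neq_ltn h.
rewrite subn_eq0 [t == T]eqn_leq h /=.
case: (T <= t)%N; last by rewrite andbF coef0.
by rewrite coefXn andbT eq_sym.
Qed.

Lemma coef_int_mul (k : int) (p : Rab) T S : ((k%:~R * p)`_T)`_S = k * (p`_T)`_S.
Proof. by rewrite (mulrzl p k) coefMrz coefMrz -mulrzl intz. Qed.

Lemma indep H : all (fun t => hookp (nmon t.1)) H -> phi H = 0 -> forall mu, coefL H mu = 0.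
Proof.
move=> Hh H0.
have E1 : psi (phi H) = \sum_(t <- H) t.2%:~R *
     (aZ ^+ size (nmon t.1) * bZ ^+ (head 0%N (nmon t.1)).-1).
  rewrite phiE rmorph_sum; apply: eq_big_seq => t tH.
  rewrite rmorphM rmorph_int -P_nmon P_hook; last exact: (allP Hh).
  by rewrite rmorphM !rmorphXn psi_x psi_b.
have K : forall S T, \sum_(t <- H) t.2 * ((size (nmon t.1) == S) && ((head 0%N (nmon t.1)).-1 == T))%:R = 0.
  move=> S T; move: (congr1 (fun p : Rab => (p`_T)`_S) E1).
  rewrite H0 rmorph0 coef0 coef0 /= => E2.
  rewrite [X in _ = X]E2 coef_sum coef_sum; apply: eq_bigr => t _.
  by rewrite coef_int_mul coef_ab mulrC.
move=> mu; rewrite /coefL.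
case hm : (hookp mu); last first.
  apply: big1_seq => t /andP[/eqP e tH].
  by move: (allP Hh t tH); rewrite e hm.
rewrite -[X in _ = X](K (size mu) (head 0%N mu).-1) big_mkcond /=; apply: eq_big_seq => t tH.
have ht := allP Hh t tH.
case: eqP => [-> | ne]; first by rewrite !eqxx mulr1.
suff -> : ((size (nmon t.1) == size mu) && ((head 0%N (nmon t.1)).-1 == (head 0%N mu).-1)) = false by rewrite mulr0.
apply/negbTE/negP => /andP[/eqP es /eqP eh]; apply: ne.
move: ht hm es eh; case: (nmon t.1) => [|a r]; case: mu => [|b r'] //= ha hb [es] eh.
have [ra a0] := hook_shape _ _ ha; have [rb b0] := hook_shape _ _ hb.
have -> : a = b by rewrite -(prednK a0) -(prednK b0) eh.
by congr (_ :: _); rewrite ra rb es.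
Qed.
Definition Qs n (d : 'I_n -> int) (s : 'S_n) : int := \sum_i d i * (s i : nat)%:Z.
Arguments Qs {n}.

Lemma Q_step n (d : 'I_n -> int) (s : 'S_n) (i0 j : 'I_n) :
  s j = i0 -> i0 != j ->
  Qs d s = Qs d (tperm i0 j * s)%g + (d i0 - d j) * ((s i0 : nat)%:Z - (i0 : nat)%:Z).
Proof.
move=> sj ne.
rewrite /Qs -[X in X = _](subrK (\sum_i d i * ((tperm i0 j * s)%g i : nat)%:Z)) addrC.
congr (_ + _); rewrite -sumrB (bigD1 i0) //= (bigD1 j) /=; last by rewrite eq_sym.
rewrite big1 ?addr0; last first.
  move=> x /andP[x1 x2]; rewrite permM tpermD 1?eq_sym // subrr //.
rewrite !permM tpermL tpermR sj -!mulrBr mulrBl; congr (_ + _).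
by rewrite -mulrN opprB.
Qed.

Lemma Q_main n (d : 'I_n -> int) : (forall i j : 'I_n, (i < j)%N -> d j < d i) ->
  forall s : 'S_n, Qs d 1%g <= Qs d s /\ (s != 1%g -> Qs d 1%g < Qs d s).
Proof.
move=> Hd.
suff H : forall k (s : 'S_n), (#|[set i | s i != i]| <= k)%N ->
   Qs d 1%g <= Qs d s /\ (s != 1%g -> Qs d 1%g < Qs d s).
  by move=> s; apply: (H _ s (leqnn _)).
elim=> [|k IH] s hk.
  have -> : s = 1%g.
    apply/permP => i; rewrite perm1; apply/eqP; apply/negPn/negP => ne.
    by move: hk; rewrite leqn0 => /eqP/cards0_eq/setP/(_ i); rewrite inE ne inE.
  by rewrite eqxx lexx.
case: (eqVneq s 1%g) => [-> | sne]; first by split=> //; exact: lexx.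
have [i Hi] : exists i, s i != i.
  case: (pickP (fun i => s i != i)) => [i' Hi' | H]; first by exists i'.
  by move/eqP: sne; case; apply/permP => x; rewrite perm1; apply/eqP/negPn; rewrite H.
case: (@arg_minnP _ i (fun i => s i != i) (fun i => nat_of_ord i) Hi) => i0 Hi0 Hmin.
have fixb : forall x : 'I_n, (x < i0)%N -> s x = x.
  move=> x lx; apply/eqP; apply/negPn/negP => nx.
  by move: (Hmin x nx); rewrite leqNgt lx.
set j := (s^-1)%g i0.
have sj : s j = i0 by rewrite permKV.
have si0 : (i0 < s i0)%N.
  rewrite ltnNge leq_eqVlt negb_or; apply/andP; split.
    by rewrite eq_sym; apply/negP => /eqP /val_inj H; rewrite -H eqxx in Hi0.
  apply/negP => lt.
  have := fixb _ lt => /perm_inj H.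
  by rewrite H eqxx in Hi0.
have ij : (i0 < j)%N.
  rewrite ltnNge leq_eqVlt negb_or; apply/andP; split.
    by apply/negP => /eqP /val_inj H; move: Hi0; rewrite -{1}H sj eqxx.
  apply/negP => lt.
  have := fixb _ lt; rewrite sj => H.
  by move: lt; rewrite -H ltnn.
have ne : i0 != j by apply/negP => /eqP H; move: ij; rewrite H ltnn.
set s' := (tperm i0 j * s)%g.
have Hq := @Q_step _ d s i0 j sj ne.
have pos : 0 < (d i0 - d j) * ((s i0 : nat)%:Z - (i0 : nat)%:Z).
  by apply: mulr_gt0; rewrite subr_gt0 ?ltz_nat //; apply: Hd.
have card : (#|[set i | s' i != i]| <= k)%N.
  rewrite -ltnS; apply: leq_trans hk; apply: proper_card; apply/properP; split.
    apply/subsetP => x; rewrite !inE /s' permM.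
    case: (eqVneq x i0) => [-> | x1]; first by rewrite tpermL sj eqxx.
    case: (eqVneq x j) => [-> | x2]; first by rewrite sj eq_sym.
    by rewrite tpermD // eq_sym.
  by exists i0; rewrite !inE // /s' permM tpermL sj eqxx.
have [le1 _] := IH s' card.
split; first by rewrite Hq; apply: le_trans le1 _; rewrite lerDl ltW.
by move=> _; rewrite Hq; apply: le_lt_trans le1 _; rewrite ltrDl.
Qed.
Lemma geq_trans : transitive geq.
Proof. by move=> x y z /= h1 h2; exact: leq_trans h2 h1. Qed.

Lemma Kc (mu : seq nat) i j : sorted geq mu ->
  (j < count (fun q => i < q) mu)%N = (i < nth 0%N mu j)%N.
Proof.
elim: mu j => [|a mu IH] j /=; first by rewrite nth_nil.
move=> Hs; have Hs' : sorted geq mu by move: Hs; case: (mu) => //= b r /andP[].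
case: (ltnP i a) => ia /=.
  case: j => [|j] //=; rewrite add1n ltnS; exact: IH.
have -> : count (fun q => i < q)%N mu = 0%N.
  apply/eqP; rewrite -leqn0 leqNgt -has_count; apply/hasP => [[q qm iq]].
  have := order_path_min geq_trans Hs => /allP /(_ q qm) /= qa.
  by move: (leq_trans iq (leq_trans qa ia)); rewrite ltnn.
case: j => [|j] /=; rewrite addn0; first by rewrite [RHS]ltnNge ia.
apply/esym/negbTE; rewrite -leqNgt.
case: (ltnP j (size mu)) => js; last by rewrite nth_default.
have := order_path_min geq_trans Hs => /allP /(_ (nth 0%N mu j) (mem_nth _ js)) /= qa.
exact: leq_trans qa ia.
Qed.

Lemma size_conjp mu : size (conjp mu) = head 0%N mu.
Proof. by rewrite /conjp size_map size_iota. Qed.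

Lemma nth_conjp mu i : (i < head 0%N mu)%N -> nth 0%N (conjp mu) i = count (fun q => i < q)%N mu.
Proof. by move=> h; rewrite /conjp (nth_map 0%N) ?size_iota // nth_iota. Qed.

Lemma head_max mu j : sorted geq mu -> (nth 0%N mu j <= head 0%N mu)%N.
Proof.
case: mu => [|a mu] /=; first by rewrite nth_nil.
move=> Hs; case: j => [|j] //=.
case: (ltnP j (size mu)) => js; last by rewrite nth_default.
by have := order_path_min geq_trans Hs => /allP /(_ (nth 0%N mu j) (mem_nth _ js)).
Qed.

Lemma count_iota_lt a h : (a <= h)%N -> count (fun i => i < a)%N (iota 0 h) = a.
Proof.
move=> ah; rewrite -(subnKC ah) iotaD count_cat.
rewrite (eq_in_count (a2 := predT)); last by move=> x; rewrite mem_iota => /andP[_].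
rewrite count_predT size_iota add0n (eq_in_count (a2 := pred0)) ?count_pred0 ?addn0 //.
by move=> x; rewrite mem_iota => /andP[h1 _] /=; rewrite ltnNge h1.
Qed.

Lemma conjpK mu : is_partition mu -> conjp (conjp mu) = mu.
Proof.
case/andP => Hs Hp.
have hc : head 0%N (conjp mu) = size mu.
  case: mu Hs Hp => [|a mu] // Hs /andP[a0 Hp].
  rewrite -nth0 nth_conjp //= a0 add1n; congr (_.+1).
  by apply/eqP; rewrite -all_count.
rewrite {1}/conjp hc -[in RHS](mkseq_nth 0%N mu) /mkseq; apply/eq_in_map => j.
rewrite mem_iota add0n => js.
rewrite /conjp count_map.
rewrite (eq_in_count (a2 := fun i => (i < nth 0%N mu j)%N)); last by move=> i _; exact: (Kc mu i j Hs).
exact: (count_iota_lt (nth 0%N mu j) (head 0%N mu) (head_max mu j Hs)).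
Qed.

Lemma conjp_part mu : is_partition mu -> is_partition (conjp mu).
Proof.
case/andP => Hs Hp; apply/andP; split.
  rewrite /conjp sorted_map; apply: (@sub_sorted _ ltn); last exact: iota_ltn_sorted.
  by move=> x y /= xy; apply: sub_count => q /=; apply: ltn_trans.
apply/allP => c /mapP [i]; rewrite mem_iota add0n => ih ->.
case: mu Hs Hp ih => [|a mu] //= _ _ ia.
by rewrite ia add1n.
Qed.

Lemma conjp_22 mu : is_partition mu -> (2 <= nth 0%N mu 1)%N -> contains22 (conjp mu).
Proof.
case/andP => Hs Hp h2.
have hh : (1 < head 0%N mu)%N by apply: leq_trans h2 (head_max _ _ Hs).
rewrite /contains22 (nth_conjp mu 0) ?(ltn_trans _ hh) // (nth_conjp mu 1) //.
rewrite (Kc mu 0 1 Hs) (Kc mu 1 1 Hs) h2 andbT.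
exact: ltn_trans h2.
Qed.

Set Implicit Arguments. Unset Strict Implicit.

Definition monoc (mu : seq nat) (s : 'S_(size mu)) : seq nat :=
  [seq absz (jt_idx mu i (s i)) | i : 'I_(size mu) <- enum 'I_(size mu)].
Definition goodc (mu : seq nat) (s : 'S_(size mu)) : bool :=
  all (fun i : 'I_(size mu) => 0 <= jt_idx mu i (s i)) (enum 'I_(size mu)).
Definition restc (mu : seq nat) : Lam :=
  [seq (monoc s, ((-1) ^+ odd_perm s : int)) | s : {perm 'I_(size mu)} <- enum [set: {perm 'I_(size mu)}]
    & goodc s && (s != 1%g)].
Definition dd (mu : seq nat) (i : 'I_(size mu)) : int := (nth 0%N mu i)%:Z - (i : nat)%:Z.
Definition meas (m : seq nat) : nat := sumn [seq (k * k)%N | k <- m].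

Lemma jtE mu (i : 'I_(size mu)) (j : nat) : jt_idx mu i j = dd i + j%:Z.
Proof. by []. Qed.

Lemma monoc1 mu : monoc (1%g : 'S_(size mu)) = mu.
Proof.
rewrite /monoc (eq_map (g := fun i : 'I_(size mu) => nth 0%N mu i)); last first.
  by move=> i; rewrite perm1 jtE /dd subrK absz_nat.
by rewrite (map_comp (nth 0%N mu) val) val_enum_ord -/(mkseq _ _) mkseq_nth.
Qed.

Lemma goodc1 mu : goodc (1%g : 'S_(size mu)).
Proof. by apply/allP => i _; rewrite perm1 jtE /dd subrK. Qed.

Lemma coefL_schurc mu nu : is_partition mu ->
  coefL (schurc mu) nu = (if mu == nu then 1 else 0) + coefL (restc mu) nu.
Proof.
move=> Hp.
rewrite /coefL /schurc /restc !big_map [LHS]big_filter_cond [in RHS]big_filter_cond !big_enum_cond /=.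
have g1 := goodc1 mu; have m1 := monoc1 mu; rewrite /goodc in g1; rewrite /monoc in m1.
rewrite /goodc /monoc.
rewrite big_mkcond [in RHS]big_mkcond /= (bigD1 1%g) //= [in RHS](bigD1 1%g) //=.
rewrite g1 m1 (nmon_id _ Hp) /= odd_perm1 expr0 !in_setT /= eqxx /= add0r.
congr (_ + _); apply: eq_bigr => s ne; rewrite ne andbT //.
Qed.

Lemma sumn_ord l (f : 'I_l -> nat) : (sumn [seq f i | i <- enum 'I_l])%:Z = \sum_i (f i)%:Z.
Proof.
rewrite sumnE big_map big_enum /=.
by apply: (big_morph Posz PoszD (erefl _)).
Qed.

Lemma monoc_int mu (s : 'S_(size mu)) : goodc s ->
  forall i : 'I_(size mu), (absz (jt_idx mu i (s i)))%:Z = dd i + (s i : nat)%:Z.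
Proof. by move=> /allP g i; rewrite gez0_abs // g // mem_enum. Qed.

Lemma sum_perm l (F : 'I_l -> int) (s : 'S_l) : \sum_i F (s i) = \sum_i F i.
Proof. by rewrite [RHS](reindex_inj (@perm_inj _ s)). Qed.

Lemma monoc_sumn mu (s : 'S_(size mu)) : goodc s -> sumn (monoc s) = sumn mu.
Proof.
move=> g; apply/eqP; rewrite -eqz_nat -{2}(monoc1 mu) /monoc !sumn_ord.
under eq_bigr do rewrite monoc_int //.
under [X in _ == X]eq_bigr do rewrite monoc_int ?goodc1 //.
rewrite !big_split /= (sum_perm (fun i => (i : nat)%:Z)).
by under [X in _ == _ + X]eq_bigr do rewrite perm1.
Qed.

Lemma meas_int mu (s : 'S_(size mu)) : goodc s ->
  (meas (monoc s))%:Z = \sum_(i : 'I_(size mu)) dd i ^+ 2 + (Qs (@dd mu) s) *+ 2 + \sum_(i : 'I_(size mu)) ((i : nat)%:Z) ^+ 2.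
Proof.
move=> g; rewrite /meas /monoc -map_comp sumn_ord.
under eq_bigr do rewrite /= PoszM monoc_int // -expr2 sqrrD.
rewrite !big_split /= mulr2n (sum_perm (fun i => ((i : nat)%:Z) ^+ 2)).
by [].
Qed.

Lemma dd_decr mu : is_partition mu -> forall i j : 'I_(size mu), (i < j)%N -> dd j < dd i.
Proof.
case/andP => Hs _ i j ij; rewrite /dd.
apply: ler_ltB; last by rewrite ltz_nat.
rewrite lez_nat.
have := sorted_leq_nth geq_trans (fun x => leqnn x) 0%N Hs.
by move=> /(_ i j); rewrite !inE !ltn_ord => /(_ isT isT (ltnW ij)).
Qed.

Lemma monoc_meas mu (s : 'S_(size mu)) : is_partition mu -> goodc s -> s != 1%g ->
  (meas mu < meas (monoc s))%N.
Proof.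
move=> Hp g ne; rewrite -ltz_nat -{1}(monoc1 mu) !meas_int ?goodc1 //.
rewrite ltrD2r ltrD2l ltr_pMn2r //.
by have [_ ] := @Q_main _ (@dd mu) (dd_decr Hp) s; apply.
Qed.

Definition goodcs (cs : seq (seq nat * int)) :=
  all (fun pc => is_partition pc.1 && contains22 pc.1) cs.
Definition hookL (H : Lam) := all (fun t => hookp (nmon t.1)) H.
Definition Red (f : Lam) := exists cs H, goodcs cs /\ hookL H /\
  forall mu, coefL f mu = coefL (lam_comb cs) mu + coefL H mu.

Lemma Red_nil : Red [::].
Proof. by exists [::], [::]; do 2 split => //; move=> mu; rewrite /lam_comb /= !coefL_nil addr0. Qed.

Lemma Red_cat f g : Red f -> Red g -> Red (f ++ g).
Proof.
move=> [cs1 [H1 [g1 [h1 e1]]]] [cs2 [H2 [g2 [h2 e2]]]].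
exists (cs1 ++ cs2), (H1 ++ H2); split; first by rewrite /goodcs all_cat; apply/andP.
split; first by rewrite /hookL all_cat; apply/andP.
move=> mu; rewrite !coefL_cat e1 e2 !coefL_comb big_cat /= -!coefL_comb.
by rewrite addrACA.
Qed.

Lemma Red_sc c f : Red f -> Red (sc c f).
Proof.
move=> [cs [H [g [h e]]]].
exists [seq (pc.1, c * pc.2) | pc <- cs], (sc c H); split.
  by rewrite /goodcs all_map; apply: sub_all g => pc.
split; first by rewrite /hookL /sc all_map; apply: sub_all h => t.
move=> mu; rewrite !coefL_sc e !coefL_comb big_map /= mulrDr mulr_sumr.
by congr (_ + _); apply: eq_bigr => pc _; rewrite mulrA.
Qed.

Lemma Red_eq f g : (forall mu, coefL f mu = coefL g mu) -> Red g -> Red f.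
Proof. by move=> E [cs [H [g1 [h e]]]]; exists cs, H; split => // ; split => // mu; rewrite E e. Qed.

Lemma Red_list f : (forall t, t \in f -> Red [:: (t.1, 1)]) -> Red f.
Proof.
elim: f => [|t f IH] H; first exact: Red_nil.
have -> : t :: f = sc t.2 [:: (t.1, 1)] ++ f by rewrite /sc /= mulr1; case: t {H}.
apply: Red_cat; first by apply: Red_sc; apply: H; rewrite inE eqxx.
by apply: IH => u uf; apply: H; rewrite inE uf orbT.
Qed.

Lemma sumn_filter_pos m : sumn (filter (fun k => 0 < k)%N m) = sumn m.
Proof. by elim: m => [|[|k] m IH] //=; rewrite IH. Qed.

Lemma meas_filter_pos m : meas (filter (fun k => 0 < k)%N m) = meas m.
Proof. by elim: m => [|[|k] m IH] //=; rewrite /meas /= -/(meas _) IH. Qed.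

Lemma sumn_nmon m : sumn (nmon m) = sumn m.
Proof. by rewrite (perm_sumn (perm_nmon m)) sumn_filter_pos. Qed.

Lemma meas_nmon m : meas (nmon m) = meas m.
Proof. by rewrite /meas (perm_sumn (perm_map _ (perm_nmon m))) -/(meas (filter _ m)) meas_filter_pos. Qed.

Lemma meas_le m : (meas m <= (sumn m) ^ 2)%N.
Proof.
elim: m => [|k m IH] //=; rewrite /meas /= -/(meas _) sqrnD.
by rewrite mulnn -addnA leq_add2l (leq_trans IH) // leq_addr.
Qed.

Definition gap m := ((sumn m) ^ 2 - meas m)%N.

Lemma coefL_single m nu : coefL [:: (m, 1)] nu = if nmon m == nu then 1 else 0.
Proof. by rewrite coefL_cons coefL_nil addr0. Qed.

Lemma Red_step m : (forall m', (gap m' < gap m)%N -> Red [:: (m', 1)]) -> Red [:: (m, 1)].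
Proof.
move=> IH.
set mu := nmon m.
have Hp : is_partition mu := nmon_part m.
apply: (@Red_eq _ [:: (mu, 1)]); first by move=> nu; rewrite !coefL_single nmonK.
case hk: (hookp mu).
  exists [::], [:: (mu, 1)]; split => //; split; first by rewrite /hookL /= nmonK hk.
  by move=> nu; rewrite /lam_comb /= coefL_nil add0r.
have h2 : (2 <= nth 0%N mu 1)%N by move: hk; rewrite /hookp Hp /= ltnNge => ->.
set la := conjp mu.
apply: (@Red_eq _ (lam_comb [:: (la, 1)] ++ sc (-1) (restc mu))).
  move=> nu; rewrite coefL_single nmon_id // coefL_cat coefL_comb big_seq1 /= mul1r.
  rewrite schurE /la conjpK // coefL_schurc // coefL_sc mulN1r addrK //.
apply: Red_cat.
  exists [:: (la, 1)], [::]; split; first by rewrite /goodcs /= conjp_part // conjp_22.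
  by split => // nu; rewrite coefL_nil addr0.
apply: Red_sc; apply: Red_list => t /mapP [s]; rewrite mem_filter => /andP[/andP[g ne] _] -> /=.
apply: IH.
have es : sumn (monoc s) = sumn m by rewrite monoc_sumn // sumn_nmon.
have lt : (meas m < meas (monoc s))%N by rewrite -meas_nmon; exact: monoc_meas.
rewrite /gap es ltn_sub2l //; first by apply: leq_trans lt _; rewrite -es meas_le.
Qed.

Lemma Red_single m : Red [:: (m, 1)].
Proof.
suff H : forall n m, (gap m <= n)%N -> Red [:: (m, 1)] by exact: (H _ m (leqnn _)).
elim=> [|n IH] m' hm; apply: Red_step => m'' lt.
  by move: (leq_trans lt hm).
by apply: IH; rewrite -ltnS (leq_trans lt hm).
Qed.

Lemma Red_all f : Red f.
Proof. by apply: Red_list => t _; exact: Red_single. Qed.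

Lemma phi_comb0 cs : goodcs cs -> phi (lam_comb cs) = 0.
Proof.
move=> Hcs; rewrite phi_comb big1_seq // => pc /andP[_ pcin].
by move/allP: Hcs => /(_ pc pcin) /andP[Hp H22]; rewrite phi_schur22 // mulr0.
Qed.

Lemma part1 f : phi f = 0 <-> in_I22 f.
Proof.
split; last exact: part1_easy.
move=> H0.
have [cs [H [g [h e]]]] := Red_all f.
have eqf : lam_eq f (lam_comb cs ++ H) by move=> mu; rewrite coefL_cat e.
have pH : phi H = 0.
  by move: H0; rewrite (phi_lam_eq _ _ eqf) phi_cat phi_comb0 // add0r.
by exists cs; split => // mu; rewrite e (indep _ h pH) addr0.
Qed.

Theorem corollary4 :
  (forall f : Lam, phi f = 0 <-> in_I22 f)
  /\ (forall y : Rab, (exists f : Lam, phi f = y) <->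
        exists (k : int) (q : Rab), y = k%:~R + xZ * q)
  /\ (forall n : nat, lamR n.+1 xZ = xZ * bZ ^+ n).
Proof.
split; first exact: part1.
split; first exact: part2.
exact: ES.
Qed.
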